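(* Let $(X,d)$ be a compact metric space with $\dim X=0$ and let $f\in\mathcal{H}(X)$ be equicontinuous. Then $f$ has the continuous shadowing property.
   Context: $\mathcal{H}(X)$ is the set of homeomorphisms of $X$. $f$ is equicontinuous if for every $\epsilon>0$ there is $\delta>0$ such that $d(x,y)\le\delta$ implies $\sup_{i\in\mathbb{Z}}d(f^i(x),f^i(y))\le\epsilon$. On $X^{\mathbb{Z}}$ use the metric $\tilde d(x,y)=\sup_{i\in\mathbb{Z}}2^{-|i|}d(x_i,y_i)$. For $\delta>0$, $P(f,\delta)\subset X^{\mathbb{Z}}$ is the set of bi-infinite $\delta$-pseudo orbits, i.e. sequences $(x_i)_{i\in\mathbb{Z}}$ with $d(f(x_i),x_{i+1})\le\delta$ for all $i\in\mathbb{Z}$. $f$ has the continuous shadowing property if for every $\epsilon>0$ there are $\delta>0$ and a continuous map $r:P(f,\delta)\to X$ with $d(f^i(r(x)),x_i)\le\epsilon$ for all $x=(x_i)_{i\in\mathbb{Z}}\in P(f,\delta)$ and all $i\in\mathbb{Z}$. *)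

(* Defs.v *)
From Stdlib Require Import Reals Lra Lia ZArith List.
Open Scope R_scope.

Section MS.
Variable M : Metric_Space.
Local Notation X := (Base M).
Local Notation d := (dist M).

Definition is_open (U : X -> Prop) : Prop :=
  forall x, U x -> exists r, r > 0 /\ forall y, d x y < r -> U y.

Definition compact_space : Prop :=
  forall (I : Type) (U : I -> X -> Prop),
    (forall i, is_open (U i)) ->
    (forall x, exists i, U i x) ->
    exists l : list I, forall x, exists i, In i l /\ U i x.

(** Covering dimension 0 (dim X = 0): X is nonempty and every finite open
    cover has a finite open refinement covering X consisting of pairwise
    disjoint sets (i.e. of order 0). *)
Definition dim_zero : Prop :=
  inhabited X /\
  forall l : list (X -> Prop),
    (forall U, In U l -> is_open U) ->
    (forall x, exists U, In U l /\ U x) ->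
    exists m : list (X -> Prop),
      (forall V, In V m -> is_open V) /\
      (forall x, exists V, In V m /\ V x) /\
      (forall V, In V m -> exists U, In U l /\ forall x, V x -> U x) /\
      (forall i j V W, nth_error m i = Some V -> nth_error m j = Some W ->
         i <> j -> forall x, ~ (V x /\ W x)).

Definition continuous_map (f : X -> X) : Prop :=
  forall x eps, eps > 0 -> exists del, del > 0 /\
    forall y, d x y < del -> d (f x) (f y) < eps.

Definition homeomorphism (f g : X -> X) : Prop :=
  (forall x, g (f x) = x) /\ (forall x, f (g x) = x) /\
  continuous_map f /\ continuous_map g.

Definition zit (f g : X -> X) (i : Z) (x : X) : X :=
  match i with
  | Z0 => x
  | Zpos p => Nat.iter (Pos.to_nat p) f x
  | Zneg p => Nat.iter (Pos.to_nat p) g x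
  end.

Definition equicontinuous (f g : X -> X) : Prop :=
  forall eps, eps > 0 -> exists del, del > 0 /\
    forall x y, d x y <= del -> forall i : Z, d (zit f g i x) (zit f g i y) <= eps.

Definition pseudo_orbit (f : X -> X) (del : R) (x : Z -> X) : Prop :=
  forall i : Z, d (f (x i)) (x (i + 1)%Z) <= del.

(** [tdist_le x y e] : the metric  sup_i 2^{-|i|} d(x_i,y_i)  on X^Z is <= e. *)
Definition tdist_le (x y : Z -> X) (e : R) : Prop :=
  forall i : Z, / (2 ^ Z.abs_nat i) * d (x i) (y i) <= e.

Definition continuous_shadowing (f g : X -> X) : Prop :=
  forall eps, eps > 0 -> exists del, del > 0 /\
    exists r : {x : Z -> X | pseudo_orbit f del x} -> X,
      (forall x e, e > 0 -> exists eta, eta > 0 /\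
         forall y, tdist_le (proj1_sig x) (proj1_sig y) eta -> d (r x) (r y) <= e) /\
      (forall x i, d (zit f g i (r x)) (proj1_sig x i) <= eps).

End MS.

(* Main.v *)
Require Import Defs.
From Stdlib Require Import Reals ZArith List Lra Lia.
Open Scope R_scope.

Lemma ball_open (M : Metric_Space) (c : Base M) (r : R) :
  is_open M (fun y => dist M c y < r).
Proof.
  intros x Hx. exists (r - dist M c x). split; [lra|].
  intros y Hy. pose proof (dist_tri M c y x). lra.
Qed.

Lemma fold_min {A : Type} (h : A -> R) (l : list A) :
  (forall a, h a > 0) ->
  fold_right (fun a acc => Rmin (h a) acc) 1 l > 0 /\
  forall a, In a l -> fold_right (fun a acc => Rmin (h a) acc) 1 l <= h a.
Proof.
  intros Hp. induction l as [|b l IH]; simpl.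
  - split; [lra| tauto].
  - destruct IH as [IH1 IH2]. split.
    + apply Rmin_pos; [apply Hp|lra].
    + intros a [<-|Ha].
      * apply Rmin_l.
      * eapply Rle_trans; [apply Rmin_r| apply IH2; exact Ha].
Qed.

Lemma partition (M : Metric_Space) (eps : R) :
  compact_space M -> dim_zero M -> eps > 0 ->
  exists S : Base M -> Base M -> Prop,
    (forall a, S a a) /\ (forall a b, S a b -> S b a) /\
    (forall a b c, S a b -> S b c -> S a c) /\
    (forall a b, S a b -> dist M a b <= eps) /\
    exists lam, lam > 0 /\ forall a b, dist M a b < lam -> S a b.
Proof.
  intros Hc [_ Hd] He.
  destruct (Hc (Base M) (fun c y => dist M c y < eps/2)) as [l Hl].
  { intros; apply ball_open. }
  { intros x. exists x. rewrite (proj2 (dist_refl M x x) eq_refl). lra. }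
  destruct (Hd (map (fun c y => dist M c y < eps/2) l)) as [m [Hmo [Hmc [Hmr Hmd]]]].
  { intros U HU. apply in_map_iff in HU. destruct HU as [c [<- _]]. apply ball_open. }
  { intros x. destruct (Hl x) as [c [Hc1 Hc2]]. exists (fun y => dist M c y < eps/2).
    split; [apply in_map_iff; exists c; auto | exact Hc2]. }
  set (S := fun a b => exists i V, nth_error m i = Some V /\ V a /\ V b).
  assert (Srefl : forall a, S a a).
  { intros a. destruct (Hmc a) as [V [HV HVa]]. apply In_nth_error in HV.
    destruct HV as [i Hi]. exists i, V. auto. }
  exists S. split; [exact Srefl|]. split.
  { intros a b [i [V [H1 [H2 H3]]]]. exists i, V. auto. }
  split.
  { intros a b c [i [V [H1 [H2 H3]]]] [j [W [H4 [H5 H6]]]].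
    destruct (Nat.eq_dec i j) as [<-|Hne].
    - rewrite H1 in H4. injection H4 as <-. exists i, V. auto.
    - exfalso. apply (Hmd i j V W H1 H4 Hne b). auto. }
  split.
  { intros a b [i [V [H1 [H2 H3]]]]. apply nth_error_In in H1.
    destruct (Hmr V H1) as [U [HU HVU]]. apply in_map_iff in HU.
    destruct HU as [c [<- _]]. pose proof (HVU a H2). pose proof (HVU b H3).
    simpl in *. pose proof (dist_tri M a b c). rewrite (dist_sym M a c) in H4. lra. }
  set (I2 := {x : Base M & {r : R | r > 0 /\ exists i V, nth_error m i = Some V /\
                 forall y, dist M x y < r -> V y}}).
  set (rad := fun i : I2 => proj1_sig (projT2 i)).
  destruct (Hc I2 (fun i y => dist M (projT1 i) y < rad i / 2)) as [l2 Hl2].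
  { intros; apply ball_open. }
  { intros x. destruct (Srefl x) as [i [V [H1 [H2 _]]]].
    pose proof H1 as H1'. apply nth_error_In in H1'.
    destruct (Hmo V H1' x H2) as [r [Hr HrV]].
    exists (existT _ x (exist _ r (conj Hr (ex_intro _ i (ex_intro _ V (conj H1 HrV)))))).
    simpl. unfold rad; simpl. rewrite (proj2 (dist_refl M x x) eq_refl). lra. }
  assert (Hrad : forall i, rad i / 2 > 0).
  { intros i. unfold rad. pose proof (proj1 (proj2_sig (projT2 i))). lra. }
  destruct (fold_min (fun i => rad i / 2) l2 Hrad) as [Hlam1 Hlam2].
  exists (fold_right (fun a acc => Rmin (rad a / 2) acc) 1 l2). split; [exact Hlam1|].
  intros a b Hab. destruct (Hl2 a) as [i [Hi Hia]].
  pose proof (Hlam2 i Hi). simpl in Hia.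
  unfold rad in *. destruct i as [c [r Hr0]]. simpl in *. destruct Hr0 as [Hr [k [V [Hk HV]]]].
  exists k, V. split; [exact Hk|]. split.
  - apply HV. lra.
  - apply HV. pose proof (dist_tri M c b a). lra.
Qed.

Lemma zit_nat (M : Metric_Space) (f g : Base M -> Base M) n a :
  zit M f g (Z.of_nat n) a = Nat.iter n f a.
Proof.
  destruct n; simpl; [reflexivity|]. rewrite SuccNat2Pos.id_succ. reflexivity.
Qed.

Theorem lemma3p2 (M : Metric_Space) (f g : Base M -> Base M) :
  compact_space M -> dim_zero M -> homeomorphism M f g ->
  equicontinuous M f g -> continuous_shadowing M f g.
Proof.
  intros Hc Hd [Hgf _] Heq eps He.
  destruct (partition M eps Hc Hd He) as [S [Sr [Ss [St [Sd [lam [Hl HS]]]]]]].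
  destruct (Heq (lam/2)) as [del [Hdel Hdel2]]; [lra|].
  assert (Hcl : forall a b, dist M a b <= del -> forall i, S (zit M f g i a) (zit M f g i b)).
  { intros a b Hab i. apply HS. pose proof (Hdel2 a b Hab i). lra. }
  exists del. split; [exact Hdel|].
  exists (fun x => proj1_sig x 0%Z). split.
  - intros x e Hee. exists e. split; [exact Hee|]. intros y Hy.
    specialize (Hy 0%Z). simpl in Hy. rewrite Rinv_1, Rmult_1_l in Hy. exact Hy.
  - intros [x Hx] i. simpl.
    assert (Fw : forall n k, S (Nat.iter n f (x k)) (x (k + Z.of_nat n)%Z)).
    { induction n as [|n IH]; intros k.
      - simpl. rewrite Z.add_0_r. apply Sr.
      - rewrite Nat.iter_succ_r.
        pose proof (Hcl _ _ (Hx k) (Z.of_nat n)) as H1.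
        rewrite !zit_nat in H1.
        eapply St; [exact H1|].
        rewrite Nat2Z.inj_succ. replace (k + Z.succ (Z.of_nat n))%Z with (k + 1 + Z.of_nat n)%Z by (unfold Z.succ; ring).
        apply IH. }
    assert (Bw : forall n k, S (x (k - Z.of_nat n)%Z) (Nat.iter n g (x k))).
    { induction n as [|n IH]; intros k.
      - simpl. rewrite Z.sub_0_r. apply Sr.
      - pose proof (Hcl _ _ (Hx (k-1)%Z) (Z.neg (Pos.of_succ_nat n))) as H1.
        simpl in H1. rewrite SuccNat2Pos.id_succ in H1.
        rewrite Nat.iter_succ_r, Hgf in H1.
        replace (k - 1 + 1)%Z with k in H1 by lia.
        eapply St; [|exact H1].
        rewrite Nat2Z.inj_succ. replace (k - Z.succ (Z.of_nat n))%Z with (k - 1 - Z.of_nat n)%Z by (unfold Z.succ; ring).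
        apply IH. }
    destruct i as [|p|p]; simpl.
    + apply Sd, Sr.
    + apply Sd. pose proof (Fw (Pos.to_nat p) 0%Z) as H.
      rewrite positive_nat_Z in H. exact H.
    + apply Sd, Ss. pose proof (Bw (Pos.to_nat p) 0%Z) as H.
      rewrite positive_nat_Z in H. exact H.
Qed.
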